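(* Let $I,S\ge 0$ and $j$ be integers with $L(I,S)\le j\le\lfloor I/2\rfloor$, and consider the pairing process described in the context. Let $B$ be a set of $j$ bb-pairings that is the set of bb-pairings of some possible wiring. The number of possible wirings whose set of bb-pairings is exactly $B$ equals $S!$ if $(I,S,j)$ is in the dagger case, and equals the number of ordered selections (dispositions) of $I-2j$ distinct elements from a set of $S$ elements, namely $\frac{S!}{(S-I+2j)!}$, otherwise.
   Context: Pairing process: there are $I$ infected devices $b_1,\dots,b_I$ and $S$ clean devices $w_1,\dots,w_S$. For $t=1,\dots,I$ in this order: if $b_t$ is not yet paired and at least one device other than $b_t$ is not yet paired, then $b_t$ chooses one of the currently unpaired devices other than itself uniformly at random, independently of previous choices, and becomes paired with it; otherwise $b_t$ does nothing. Each device belongs to at most one pair. The wiring is the final set of pairs; a bb-pairing is a pair consisting of two infected devices; a wiring is possible if it occurs with positive probability. $L(I,S)=0$ if $I\le S$; $L(I,S)=\frac{I-S}{2}$ if $I>S$ and $I-S$ is even; $L(I,S)=\frac{I-S-1}{2}$ if $I>S$ and $I-S$ is odd. $(I,S,j)$ is in the dagger case if $I>S$, $I+S$ is odd and $j=\frac{I-S-1}{2}$. *)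

(* Defs.v *)
From HB Require Import structures.
From mathcomp Require Import all_boot all_order all_algebra.
Set Implicit Arguments. Unset Strict Implicit. Unset Printing Implicit Defensive.
Import GRing.Theory Num.Theory.

(* Devices: inl t = infected device b_(t+1) (t : 'I_I),
            inr s = clean device w_(s+1) (s : 'I_S). *)
Definition device (I S : nat) : finType := ('I_I + 'I_S)%type.

(* A pair is a 2-element set of devices; a (partial) wiring is a set of pairs. *)
Definition wiring (I S : nat) := {set {set device I S}}.

Definition paired I S (M : wiring I S) : {set device I S} := cover M.

Definition avail I S (M : wiring I S) (x : device I S) : {set device I S} :=
  [set y | (y != x) && (y \notin paired M)].

(* prob ts M W = probability that, starting from the partial wiring M and
   letting the infected devices b_t for t in ts act in this order, the final
   wiring is W. *)
Fixpoint prob I S (ts : seq 'I_I) (M : wiring I S) (W : wiring I S) : rat :=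
  match ts with
  | [::] => (M == W)%:R%R
  | t :: ts' =>
      let x : device I S := inl t in
      let A := avail M x in
      if (x \notin paired M) && (A != set0) then
        (\sum_(y in A) ((#|A|%:R)^-1 * prob ts' (M :|: [set [set x; y]]) W)%R)%R
      else prob ts' M W
  end.

Definition wiring_prob I S (W : wiring I S) : rat := prob (enum 'I_I) set0 W.

Definition possible I S (W : wiring I S) : bool := (0 < wiring_prob W)%R.


Definition is_infected I S (x : device I S) : bool :=
  if x is inl _ then true else false.

Definition bb_pairings I S (W : wiring I S) : wiring I S :=
  [set p in W | [forall x in p, is_infected x]].

Definition L (I S : nat) : nat :=
  if I <= S then 0
  else if ~~ odd (I - S) then (I - S) %/ 2 else (I - S - 1) %/ 2.

Definition dagger (I S j : nat) : bool :=
  [&& S < I, odd (I + S) & j == (I - S - 1) %/ 2].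

(* Main.v *)
Require Import Defs.
From HB Require Import structures.
From mathcomp Require Import all_boot all_order all_algebra.
From mathcomp Require Import zify.
Set Implicit Arguments. Unset Strict Implicit. Unset Printing Implicit Defensive.
Import GRing.Theory Num.Theory.

Section Proc.
Variables I S : nat.
Local Notation dev := (device I S).
Local Notation wir := (wiring I S).

Lemma prob_ge0 ts (M W : wir) : (0 <= prob ts M W)%R.
Proof.
elim: ts M => [|t ts IH] M /=; first by case: (M == W).
case: ifP => _ //; apply: sumr_ge0 => y _; apply: mulr_ge0 => //.
by rewrite invr_ge0 ler0n.
Qed.

Lemma prob_pos_cons t ts (M W : wir) :
  (0 < prob (t :: ts) M W)%R <->
  (if ((inl t : dev) \notin paired M) && (avail M (inl t) != set0) then
     exists2 y, y \in avail M (inl t) & (0 < prob ts (M :|: [set [set (inl t : dev); y]]) W)%R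
   else (0 < prob ts M W)%R).
Proof.
rewrite /=; case: ifP => [/andP[_ hA] | _] //; split.
- move/lt0r_neq0/eqP=> h; have [|y /andP[hy hp]] := psumr_neq0P _ h.
  + by move=> y _; apply: mulr_ge0; [rewrite invr_ge0 ler0n | exact: prob_ge0].
  exists y => //; move: hp; rewrite pmulr_rgt0 // invr_gt0 ltr0n lt0n cards_eq0.
  done.
- case=> y hy hp; rewrite lt0r; apply/andP; split; last first.
    by apply: sumr_ge0 => z _; apply: mulr_ge0; [rewrite invr_ge0 ler0n | exact: prob_ge0].
  rewrite psumr_neq0; last by move=> z _; apply: mulr_ge0; [rewrite invr_ge0 ler0n | exact: prob_ge0].
  apply/hasP; exists y; first by rewrite mem_index_enum.
  by rewrite hy /= pmulr_rgt0 // invr_gt0 ltr0n lt0n cards_eq0.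
Qed.

Local Notation ib t := (@inl 'I_I 'I_S t).

Lemma pairedP (M : wir) (x : dev) :
  reflect (exists2 p, p \in M & x \in p) (x \in paired M).
Proof.
rewrite /paired /cover; apply: (iffP bigcupP) => [[p hp hx]|[p hp hx]]; by exists p.
Qed.

Definition Pa k (M : wir) := forall p, p \in M -> exists a, exists y : dev,
  [/\ (val a < k)%N, p = [set ib a; y], y != ib a & forall c, y = ib c -> (val a < val c)%N].
Definition Pb (M : wir) := forall p q (x : dev), p \in M -> q \in M -> x \in p -> x \in q -> p = q.
Definition Pc k (M : wir) := forall a : 'I_I, (val a < k)%N ->
  ib a \in paired M \/ ((forall y : dev, y != ib a -> y \in paired M) /\
       forall p, p \in M -> exists2 c : 'I_I, (val c < val a)%N & ib c \in p).
Definition Pst k M := [/\ Pa k M, Pb M & Pc k M].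
Definition Wlt (W : wir) k : wir := [set p in W | [exists c : 'I_I, (val c < k)%N && (ib c \in p)]].

Lemma Wlt_sub W k : Wlt W k \subset W.
Proof. by apply/subsetP => p; rewrite inE => /andP[]. Qed.

Lemma Wlt_id k M : Pa k M -> Wlt M k = M.
Proof.
move=> hA; apply/setP => p; rewrite inE; apply/andP/idP => [[]//|hp]; split=> //.
have [a [y [ha -> _ _]]] := hA p hp; apply/existsP; exists a; rewrite ha /=.
by rewrite !inE eqxx.
Qed.

Lemma Wlt_Wlt W k k' : (k <= k')%N -> Wlt (Wlt W k') k = Wlt W k.
Proof.
move=> hk; apply/setP => p; rewrite !inE; apply/idP/idP.
  by case/andP => /andP[-> _] ->.
case/andP=> -> /existsP[c /andP[hc hp]] /=; apply/andP; split; apply/existsP; exists c.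
  by rewrite hp (leq_trans hc).
by rewrite hp hc.
Qed.

Lemma Wlt_S W k t : val t = k -> Wlt W k.+1 = Wlt W k :|: [set p in W | ib t \in p].
Proof.
move=> ht; apply/setP => p; rewrite !inE; apply/idP/idP.
  case/andP => hW /existsP[c /andP[hc hp]]; rewrite hW /=.
  rewrite ltnS leq_eqVlt in hc; case/orP: hc => hc.
    have -> : t = c by apply: val_inj; rewrite ht (eqP hc).
    by rewrite hp orbT.
  by apply/orP; left; apply/existsP; exists c; rewrite hc.
case/orP => [/andP[-> /existsP[c /andP[hc hp]]]|/andP[-> hp]] /=; apply/existsP.
  by exists c; rewrite hp (ltn_trans hc).
by exists t; rewrite hp ht ltnSn.
Qed.

Lemma Pa_mono k k' M : (k <= k')%N -> Pa k M -> Pa k' M.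
Proof.
move=> hk hA p hp; have [a [y [h1 h2 h3 h4]]] := hA p hp.
by exists a, y; split=> //; apply: leq_trans hk.
Qed.

Lemma Pst_skip k (M : wir) (t : 'I_I) : val t = k -> Pst k M ->
  ~~ ((ib t \notin paired M) && (avail M (ib t) != set0)) -> Pst k.+1 M.
Proof.
move=> ht [hA hB hC] hn; split=> //; first exact: Pa_mono hA.
move=> a; rewrite ltnS leq_eqVlt => /orP[/eqP ha|ha]; last exact: hC.
have -> : a = t by apply: val_inj; rewrite ha ht.
case/nandP: hn; rewrite ?negbK => hn; first by left.
right; split.
  move=> y hy; apply: contraT => hny; move/eqP: hn => /setP /(_ y).
  by rewrite !inE hy hny.
move=> p hp; have [c [z [hc -> _ _]]] := hA p hp; exists c; first by rewrite ht.
by rewrite !inE eqxx.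
Qed.

Lemma Pst_add k (M : wir) (t : 'I_I) (y : dev) : val t = k -> Pst k M ->
  ib t \notin paired M -> y \in avail M (ib t) ->
  Pst k.+1 (M :|: [set [set ib t; y]]).
Proof.
move=> ht [hA hB hC] ht0; rewrite inE => /andP[hyt hy0].
have oldC : forall a : 'I_I, (val a < k)%N -> ib a \in paired M.
  move=> a ha; case: (hC a ha) => // [[hall _]].
  have : ib t != ib a.
    by apply/eqP => [[e]]; move: ha; rewrite -e ht ltnn.
  by move/hall => h; rewrite h in ht0.
have newP : forall x, x \in [set ib t; y] -> x \notin paired M.
  by move=> x; rewrite !inE => /orP[]/eqP->.
split.
- move=> p; rewrite inE => /orP[hp|]; last rewrite inE => /eqP ->.
    have [a [z [h1 h2 h3 h4]]] := hA p hp; exists a, z; split=> //.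
    exact: (leq_trans h1 (leqnSn k)).
  exists t, y; split=> //; first by rewrite ht.
  move=> c hc; rewrite ltnNge leq_eqVlt; apply/negP => /orP[/eqP e|hct].
    have ect : c = t by apply: val_inj.
    by move: hyt; rewrite hc ect eqxx.
  by move: hy0; rewrite hc (oldC c) // -ht.
- move=> p q x; rewrite !inE => /orP[hp|/eqP->] /orP[hq|/eqP->] hxp hxq //.
  + exact: hB hp hq hxp hxq.
  + by move: (newP x hxq); rewrite (_ : x \in paired M) //; apply/pairedP; exists p.
  + by move: (newP x hxp); rewrite (_ : x \in paired M) //; apply/pairedP; exists q.
- move=> a; rewrite ltnS leq_eqVlt => /orP[/eqP ha|ha].
    left; apply/pairedP; exists [set ib t; y]; first by rewrite !inE eqxx orbT.
    have -> : a = t by apply: val_inj; rewrite ha ht.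
    by rewrite !inE eqxx.
  left; have /pairedP [p hp hap] := oldC a ha; apply/pairedP; exists p => //.
  by rewrite inE hp.
Qed.

Lemma other_elt (p : {set dev}) a (y x : dev) : p = [set ib a; y] -> y != ib a ->
  x \in p -> exists2 z, z \in p & z != x.
Proof.
move=> -> hy; rewrite !inE => /orP[]/eqP->.
  by exists y; rewrite ?inE ?eqxx ?orbT.
by exists (ib a); rewrite ?inE ?eqxx // eq_sym.
Qed.

Lemma run_char k (M W : wir) : (k <= I)%N -> Pst k M ->
  (0 < prob (drop k (enum 'I_I)) M W)%R <-> Pst I W /\ Wlt W k = M.
Proof.
move e: (I - k) => n; elim: n k M e => [|n IH] k M e hk hM.
  have ek : k = I by lia.
  subst k; rewrite drop_oversize ?size_enum_ord //= ltr0n lt0b.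
  split=> [/eqP <-|[hW <-]]; first by split=> //; apply: Wlt_id; case: hM.
  idtac.
  by rewrite Wlt_id ?eqxx //; case: hW.
have hkI : (k < I)%N by lia.
have [hA hB hC] := hM.
pose t := Ordinal hkI.
have hd : drop k (enum 'I_I) = t :: drop k.+1 (enum 'I_I).
  rewrite (drop_nth t) ?size_enum_ord //; congr (_ :: _); apply: val_inj => /=.
  by rewrite nth_enum_ord.
have ht : val t = k by [].
have eIH : I - k.+1 = n by lia.
rewrite hd prob_pos_cons; case: ifP => hcnd.
- case/andP: hcnd => ht0 hav; split.
  + case=> y hy /(IH _ _ eIH hkI (Pst_add ht hM ht0 hy)) [hW hWlt]; split=> //.
    rewrite -(Wlt_Wlt W (leqnSn k)) hWlt; apply/setP => p; rewrite !inE.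
    apply/idP/idP => [/andP[/orP[-> //|/eqP -> /existsP[c /andP[hc]]]]|hp].
      rewrite !inE => /orP[]/eqP.
        by case=> ect; move: hc; rewrite ect ht ltnn.
      move=> eyc; move: hy; rewrite inE -eyc => /andP[_].
      case: (hC c hc) => [-> //|[hall _]].
      rewrite (hall (ib t)) // in ht0; apply/eqP => [[ect]]; move: hc; rewrite -ect ht ltnn //.
    have [a [z [ha ep _ _]]] := hA p hp; apply/andP; split; first by apply/orP; left.
    by apply/existsP; exists a; rewrite ha ep !inE eqxx.
  + case=> hW hWlt; have [WA WB WC] := hW.
    have hMW : M \subset W by rewrite -hWlt Wlt_sub.
    have hMW' p : p \in M -> p \in W by move=> hp; apply: (subsetP hMW).
    case: (WC t hkI) => [/pairedP [p hp htp] | [hall hlt]]; last first.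
      have eWM : W = M.
        rewrite -hWlt; apply/setP => p; rewrite inE; apply/idP/idP => [hp|/andP[//]].
        have [c hc hcp] := hlt p hp; rewrite hp; apply/existsP; exists c; by rewrite hcp hc.
      move: hav; case/set0Pn => y; rewrite inE => /andP[hyt].
      by rewrite -eWM hall.
    have hpM : p \notin M.
      by apply: contra ht0 => hpM; apply/pairedP; exists p.
    have [a [y [ha ep hya hyc]]] := WA p hp.
    have hak : (k <= val a)%N.
      rewrite leqNgt; apply: contra hpM => hak; rewrite -hWlt inE hp; apply/existsP.
      by exists a; rewrite hak ep !inE eqxx.
    have eat : a = t.
      move: htp; rewrite ep !inE => /orP[/eqP [] //|/eqP eyt].
      by have := hyc t (esym eyt); rewrite ht; lia.
    subst a.
    have hyav : y \in avail M (ib t).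
      rewrite inE hya /=; apply/negP => /pairedP [q hq hyq].
      have epq : p = q by apply: (WB p q y hp (hMW' q hq)) => //; rewrite ep !inE eqxx orbT.
      by move: hpM; rewrite epq hq.
    exists y => //; apply/(IH _ _ eIH hkI (Pst_add ht hM ht0 hyav)); split=> //.
    rewrite (Wlt_S _ ht) hWlt -ep; congr (_ :|: _); apply/setP => q; rewrite !inE.
    apply/andP/eqP => [[hq htq]|->]; last by split=> //; rewrite ep !inE eqxx.
    by apply: (WB q p (ib t)).
- move/negbT: hcnd => hcnd; have hM' := Pst_skip ht hM hcnd.
  rewrite (IH _ _ eIH hkI hM'); split => [[hW hWlt]|[hW hWlt]]; split=> //.
    by rewrite -(Wlt_Wlt W (leqnSn k)) hWlt Wlt_id.
  have [WA WB WC] := hW.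
  have hMW' p : p \in M -> p \in W by move=> hp; rewrite -hWlt in hp; apply: (subsetP (Wlt_sub W k)).
  rewrite (Wlt_S _ ht) hWlt; apply/setUidPl/subsetP => p; rewrite inE => /andP[hp htp].
  have [a [y [_ ep hya _]]] := WA p hp.
  have [z hzp hzt] := other_elt ep hya htp.
  have hz : z \in paired M.
    case/nandP: hcnd; rewrite ?negbK => hc.
      have /pairedP [q hq htq] := hc.
      by apply/pairedP; exists q => //; rewrite -(WB p q _ hp (hMW' q hq) htp htq).
    by apply: contraT => hnz; move/eqP: hc => /setP /(_ z); rewrite !inE hzt hnz.
  have /pairedP [q hq hzq] := hz.
  by rewrite (WB p q _ hp (hMW' q hq) hzp hzq).
Qed.

Lemma possibleE (W : wir) : possible W <-> Pst I W.
Proof.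
rewrite /possible /wiring_prob.
have h0 : Pst 0 (set0 : wir).
  by split=> [p|p q x|a]; rewrite ?inE.
have := run_char W (leq0n I) h0; rewrite drop0 => ->.
split=> [[]//|hW]; split=> //; apply/setP => p; rewrite !inE.
by apply/negbTE; rewrite negb_and; apply/orP; right; apply/existsPn => c.
Qed.

Lemma pair_inj a a' s s' : [set ib a; (inr s : dev)] = [set ib a'; inr s'] -> a = a' /\ s = s'.
Proof.
move=> e; have h1 : (ib a : dev) \in [set ib a'; inr s'] by rewrite -e !inE eqxx.
have h2 : (inr s : dev) \in [set ib a'; inr s'] by rewrite -e !inE eqxx orbT.
move: h1 h2; rewrite !inE /= => /orP[/eqP[->]|/eqP//] /eqP[->] //.
Qed.

Section Count.
Variables (B W0 : wir).
Hypotheses (hW0 : Pst I W0) (hb0 : bb_pairings W0 = B).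

Lemma B_sub : B \subset W0.
Proof. by rewrite -hb0; apply/subsetP => p; rewrite inE => /andP[]. Qed.

Lemma B_inf p (x : dev) : p \in B -> x \in p -> is_infected x.
Proof. by rewrite -hb0 inE => /andP[_ /forallP /(_ x) /implyP]. Qed.

Lemma new_notB a s : [set ib a; (inr s : dev)] \notin B.
Proof. by apply/negP => h; have := @B_inf _ (inr s) h; rewrite !inE eqxx orbT => /(_ isT). Qed.

Lemma B_card2 p : p \in B -> #|p| = 2.
Proof.
move=> hp; have [a [y [_ -> hy _]]] := (let: And3 hA _ _ := hW0 in hA) p (subsetP B_sub p hp).
by rewrite cards2 eq_sym hy.
Qed.

Definition Dfull : {set 'I_I} := [set a | ib a \notin cover B].

Lemma W_form (W : wir) p : Pst I W -> bb_pairings W = B -> p \in W ->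
  p \in B \/ exists a s, p = [set ib a; (inr s : dev)].
Proof.
case=> hA _ _ hb hp; have [a [y [_ ep _ _]]] := hA p hp.
case: y ep => [c|s] ep; last by right; exists a, s.
left; rewrite -hb inE hp /=; apply/forallP => x; apply/implyP.
by rewrite ep !inE => /orP[]/eqP->.
Qed.

Lemma partner (W : wir) a : Pst I W -> bb_pairings W = B -> a \in Dfull ->
  ib a \in paired W -> exists s, [set ib a; (inr s : dev)] \in W.
Proof.
move=> hW hb; rewrite inE => hD /pairedP [p hp hap].
case: (W_form hW hb hp) => [hpB|[a' [s ep]]].
  by move: hD; rewrite (_ : ib a \in cover B) //; apply/bigcupP; exists p.
exists s; move: hap; rewrite ep !inE => /orP[/eqP[->]|/eqP//].
by rewrite -ep.
Qed.

Lemma partner_uniq (W : wir) a a' s s' : Pb W ->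
  [set ib a; (inr s : dev)] \in W -> [set ib a'; (inr s' : dev)] \in W ->
  (a = a' \/ s = s') -> a = a' /\ s = s'.
Proof.
move=> hB h1 h2 e; case: e h1 h2 => -> h1 h2; apply: pair_inj.
  by apply: (hB _ _ (ib a') h1 h2); rewrite !inE eqxx.
by apply: (hB _ _ (inr s') h1 h2); rewrite !inE eqxx orbT.
Qed.


Section Gen.
Variable D : {set 'I_I}.
Hypothesis hD : D \subset Dfull.
Local Notation aT := {a : 'I_I | a \in D}.

Definition Wf (f : {ffun aT -> 'I_S}) : wir :=
  B :|: [set [set ib (val x); (inr (f x) : dev)] | x : aT].

Lemma Wf_memP (f : {ffun aT -> 'I_S}) p : reflect (p \in B \/ exists x, p = [set ib (val x); (inr (f x) : dev)]) (p \in Wf f).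
Proof.
rewrite /Wf inE; apply: (iffP orP) => [[h|/imsetP[x _ ->]]|[h|[x ->]]]; [by left|by right; exists x|by left|].
by right; apply/imsetP; exists x.
Qed.

Lemma Wf_inj : injective Wf.
Proof.
move=> f g e; apply/ffunP => x.
have : [set ib (val x); (inr (f x) : dev)] \in Wf g.
  by rewrite -e; apply/Wf_memP; right; exists x.
case/Wf_memP => [|[x' /pair_inj [e1 e2]]]; first by rewrite (negbTE (new_notB _ _)).
have ex : x = x' by apply: val_inj.
by subst x'.
Qed.


Lemma notcoverD (x : aT) : ib (val x) \notin cover B.
Proof. by have := subsetP hD _ (valP x); rewrite inE. Qed.

Lemma Wf_Pst (f : {ffun aT -> 'I_S}) : injective f ->
  (forall a, a \in Dfull -> a \notin D ->
     (forall y : dev, y != ib a -> y \in paired (Wf f)) /\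
     forall p, p \in Wf f -> exists2 c : 'I_I, (val c < val a)%N & ib c \in p) ->
  Pst I (Wf f) /\ bb_pairings (Wf f) = B.
Proof.
move=> hf hC; have [A0 B0 C0] := hW0.
have BW p : p \in B -> p \in W0 by apply: (subsetP B_sub).
have mixed p x (y : dev) : p \in B -> y \in p -> y \in [set ib (val x); (inr (f x) : dev)] -> False.
  move=> hp hyp; rewrite !inE => /orP[]/eqP ey.
    by move: (notcoverD x); rewrite -ey; move/negP; apply; apply/bigcupP; exists p.
  by have := B_inf hp hyp; rewrite ey.
split; first split.
- move=> p /Wf_memP [hp|[x ->]]; first exact: A0 _ (BW p hp).
  by exists (val x), (inr (f x)); split => //; rewrite ltn_ord.
- move=> p q y /Wf_memP [hp|[x ->]] /Wf_memP [hq|[x' ->]] hyp hyq.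
  + exact: B0 _ _ _ (BW p hp) (BW q hq) hyp hyq.
  + by case: (mixed _ _ _ hp hyp hyq).
  + by case: (mixed _ _ _ hq hyq hyp).
  + move: hyp hyq; rewrite !inE => /orP[]/eqP -> /orP[]/eqP //.
      by case=> e; have -> : x = x' by apply: val_inj.
    by case=> /hf ->.
- move=> a _; case: (boolP (ib a \in cover B)) => hcov.
    left; have /bigcupP [p hp hap] := hcov; apply/pairedP; exists p => //.
    by apply/Wf_memP; left.
  have hDa : a \in Dfull by rewrite inE.
  case: (boolP (a \in D)) => haD; last by right; apply: hC.
  left; apply/pairedP; exists [set ib a; (inr (f (exist _ a haD)) : dev)].
    by apply/Wf_memP; right; exists (exist _ a haD).
  by rewrite !inE eqxx.
- apply/setP => p; rewrite inE; apply/andP/idP.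
    case=> /Wf_memP [//|[x ->]] /forallP /(_ (inr (f x))).
    by rewrite !inE eqxx orbT.
  move=> hp; split; first by apply/Wf_memP; left.
  by apply/forallP => x; apply/implyP => hx; apply: B_inf hp hx.
Qed.


Lemma X_Wf (W : wir) : Pst I W -> bb_pairings W = B ->
  (forall a, a \in D -> ib a \in paired W) ->
  (forall a, a \in Dfull -> a \notin D -> ib a \notin paired W) ->
  exists2 f : {ffun aT -> 'I_S}, injective f & W = Wf f.
Proof.
move=> hW hb hcov hunc; have [WA WB WC] := hW.
have BW p : p \in B -> p \in W by rewrite -hb inE => /andP[].
have hex (x : aT) : exists s, [set ib (val x); (inr s : dev)] \in W.
  exact: partner hW hb (subsetP hD _ (valP x)) (hcov _ (valP x)).
pose f := [ffun x => xchoose (hex x)].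
have hfW x : [set ib (val x); (inr (f x) : dev)] \in W.
  by rewrite /f ffunE; exact: (xchooseP (hex x)).
exists f.
  move=> x x' e; apply: val_inj.
  by case: (partner_uniq WB (hfW x) (hfW x') (or_intror e)).
apply/setP => p; apply/idP/Wf_memP => [hp|[/BW //|[x ->]] //].
case: (W_form hW hb hp) => [hB|[a [s ep]]]; first by left.
right.
have hpa : ib a \in paired W by apply/pairedP; exists p => //; rewrite ep !inE eqxx.
have haF : a \in Dfull.
  rewrite inE; apply/negP => /bigcupP [q hq haq].
  have epq : p = q by apply: (WB p q (ib a) hp (BW q hq)) => //; rewrite ep !inE eqxx.
  by move: (new_notB a s); rewrite -ep epq hq.
have haD : a \in D by apply: contraT => hn; move: (hunc a haF hn); rewrite hpa.
exists (exist _ a haD); rewrite ep /=.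
have hx := hfW (exist _ a haD).
have hp' : [set ib a; (inr s : dev)] \in W by rewrite -ep.
by case: (partner_uniq WB hp' hx (or_introl erefl)) => _ ->.
Qed.


Lemma count_gen :
  (forall W : wir, Pst I W -> bb_pairings W = B ->
     (forall a, a \in D -> ib a \in paired W) /\
     (forall a, a \in Dfull -> a \notin D -> ib a \notin paired W)) ->
  (forall f : {ffun aT -> 'I_S}, injective f ->
   forall a, a \in Dfull -> a \notin D ->
     (forall y : dev, y != ib a -> y \in paired (Wf f)) /\
     forall p, p \in Wf f -> exists2 c : 'I_I, (val c < val a)%N & ib c \in p) ->
  #|[set W : wir | possible W && (bb_pairings W == B)]| = S ^_ #|D|.
Proof.
move=> h1 h2.
have -> : [set W : wir | possible W && (bb_pairings W == B)] =
          Wf @: [set f : {ffun aT -> 'I_S} | injectiveb f].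
  apply/setP => W; rewrite inE; apply/andP/imsetP.
    case=> /possibleE hW /eqP hb; have [c1 c2] := h1 W hW hb.
    have [f hf ->] := X_Wf hW hb c1 c2; exists f => //.
    by rewrite inE; apply/injectiveP.
  case=> f; rewrite inE => /injectiveP hf ->.
  have [hP hb] := Wf_Pst hf (h2 f hf); split; first exact/possibleE.
  by rewrite hb.
rewrite card_imset; last exact: Wf_inj.
by rewrite card_inj_ffuns card_ord card_sig.
Qed.

End Gen.

Lemma card_Dfull : #|Dfull| = I - 2 * #|B|.
Proof.
have [A0 B0 C0] := hW0.
have htr : trivIset B.
  apply/trivIsetP => p q hp hq hpq; rewrite -setI_eq0; apply/eqP/setP => x.
  rewrite !inE; apply/negbTE/negP => /andP[hxp hxq].
  by move/eqP: hpq; apply; apply: B0 x _ _ hxp hxq; apply: (subsetP B_sub).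
have hcov : #|cover B| = 2 * #|B|.
  move: htr; rewrite /trivIset => /eqP <-.
  rewrite (eq_bigr (fun _ => 2)); first by rewrite sum_nat_const mulnC.
  by move=> p /B_card2.
have ecov : cover B = (@inl 'I_I 'I_S) @: [set a | ib a \in cover B].
  apply/setP => x; apply/idP/imsetP => [hx|[a]]; last by rewrite inE => h ->.
  case: x hx => [a|s] hx; first by exists a; rewrite ?inE.
  by have /bigcupP [p hp hxp] := hx; have := B_inf hp hxp.
have hC : #|[set a | ib a \in cover B]| = 2 * #|B|.
  rewrite -hcov; rewrite [in RHS]ecov card_imset //; by move=> a b [].
rewrite /Dfull (_ : [set a | ib a \notin cover B] = ~: [set a | ib a \in cover B]).
  by rewrite cardsCs setCK card_ord hC.
by apply/setP => a; rewrite !inE.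
Qed.


Lemma pair_Dfull (W : wir) a s : Pst I W -> bb_pairings W = B ->
  [set ib a; (inr s : dev)] \in W -> a \in Dfull.
Proof.
case=> _ WB _ hb hp; rewrite inE; apply/negP => /bigcupP [q hq haq].
have hqW : q \in W by move: hq; rewrite -hb inE => /andP[].
have epq : [set ib a; (inr s : dev)] = q by apply: (WB _ q (ib a) hp hqW) => //; rewrite !inE eqxx.
by move: (new_notB a s); rewrite epq hq.
Qed.

Lemma unc_max (W : wir) a : Pst I W -> bb_pairings W = B -> a \in Dfull ->
  ib a \notin paired W -> forall a', a' \in Dfull -> a' != a -> (val a' < val a)%N.
Proof.
move=> hW hb hD hna a' hD' hne; have [_ _ WC] := hW.
case: (WC a (ltn_ord a)) => [h|[hall hlt]]; first by rewrite h in hna.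
have hpa : ib a' \in paired W by apply: hall; apply: contra hne => /eqP [->].
have [s hs] := partner hW hb hD' hpa.
have [c hc] := hlt _ hs; rewrite !inE => /orP[/eqP[ec]|/eqP//].
by rewrite -ec.
Qed.

Lemma all_cov_le (W : wir) : Pst I W -> bb_pairings W = B ->
  (forall a, a \in Dfull -> ib a \in paired W) -> (#|Dfull| <= S)%N.
Proof.
move=> hW hb hall; have [_ WB _] := hW.
case: (set_0Vmem Dfull) => [-> | [a0 ha0]]; first by rewrite cards0.
have [s0 _] := partner hW hb ha0 (hall a0 ha0).
pose g a := odflt s0 [pick s | [set ib a; (inr s : dev)] \in W].
have hg a : a \in Dfull -> [set ib a; (inr (g a) : dev)] \in W.
  move=> ha; rewrite /g; case: pickP => [s //|hn].
  by have [s hs] := partner hW hb ha (hall a ha); move: (hn s); rewrite hs.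
rewrite -(card_in_imset (f := g)); first by apply: leq_trans (max_card _) _; rewrite card_ord.
move=> a b ha hb' e; have := hg a ha; have := hg b hb'; rewrite e => h2 h1.
by case: (partner_uniq WB h1 h2 (or_intror erefl)).
Qed.

Lemma unc_le (W : wir) a : Pst I W -> bb_pairings W = B -> a \in Dfull ->
  ib a \notin paired W -> (S <= #|Dfull| - 1)%N.
Proof.
move=> hW hb hD hna; have [_ WB WC] := hW.
case: (WC a (ltn_ord a)) => [h|[hall _]]; first by rewrite h in hna.
have hs s : exists a', [set ib a'; (inr s : dev)] \in W.
  have /pairedP [p hp hsp] := hall (inr s) isT.
  case: (W_form hW hb hp) => [hB|[a' [s' ep]]].
    by have := B_inf hB hsp.
  exists a'; move: hsp; rewrite ep !inE => /orP[/eqP//|/eqP[es]]; by rewrite es -ep.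
pose g s := odflt a [pick a' | [set ib a'; (inr s : dev)] \in W].
have hg s : [set ib (g s); (inr s : dev)] \in W.
  rewrite /g; case: pickP => [a' //|hn].
  by have [a' ha'] := hs s; move: (hn a'); rewrite ha'.
have ginj : injective g.
  move=> s s' e; have := hg s; have := hg s'; rewrite e => h2 h1.
  by case: (partner_uniq WB h1 h2 (or_introl erefl)).
have : (#|g @: [set: 'I_S]| <= #|Dfull :\ a|)%N.
  apply: subset_leq_card; apply/subsetP => x /imsetP [s _ ->].
  rewrite in_setD1 (pair_Dfull hW hb (hg s)) andbT; apply/eqP => e.
  by move: hna; rewrite -e; move/negP; apply; apply/pairedP; exists [set ib (g s); (inr s : dev)] => //; rewrite !inE eqxx.
by rewrite card_imset // cardsT card_ord (cardsD1 a Dfull) hD add1n subn1 /=.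
Qed.

End Count.
End Proc.


Lemma arithL I S j : L I S <= j <= I %/ 2 ->
  (2 * j <= I) /\ (if dagger I S j then I - 2 * j = S.+1 else I - 2 * j <= S).
Proof.
rewrite /L /dagger => /andP[h1 h2].
have e1 := modn2 (I - S); have e2 := modn2 (I + S).
case: (odd (I - S)) e1 h1 => e1; case: (odd (I + S)) e2 => e2 /=;
case: (leqP I S) => hIS /= h1; try lia; case: eqP => /= ?; lia.
Qed.

Theorem lemma6 (I S j : nat) (B : wiring I S) :
  L I S <= j <= I %/ 2 ->
  #|B| = j ->
  (exists W : wiring I S, possible W /\ bb_pairings W = B) ->
  #|[set W : wiring I S | possible W && (bb_pairings W == B)]| =
    (if dagger I S j then S`! else S`! %/ (S - (I - 2 * j))`!).
Proof.
move=> hj hB [W0 [/possibleE hW0 hb0]].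
have [h2j hcase] := arithL hj.
have cD := card_Dfull hW0 hb0; rewrite hB in cD.
case: ifP hcase => hdag hcase.
- have hnall : forall W : wiring I S, Pst I W -> bb_pairings W = B ->
      exists2 a, a \in Dfull B & (inl a : device I S) \notin paired W.
    move=> W hW hb.
    case: (boolP [forall a in Dfull B, (inl a : device I S) \in paired W]) => hf.
      have := all_cov_le hW hb (fun a ha => (forall_inP hf) a ha); lia.
    by case/forall_inPn: hf => a ha hna; exists a.
  have [a0 ha0 hna0] := hnall W0 hW0 hb0.
  have uniq_unc : forall W : wiring I S, Pst I W -> bb_pairings W = B ->
      forall a, a \in Dfull B -> (inl a : device I S) \notin paired W -> a = a0.
    move=> W hW hb a ha hna; apply/eqP; apply: contraT => hne.
    have h1 := unc_max hW hb ha hna ha0 (_ : a0 != a); rewrite eq_sym in h1.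
    have h2 := unc_max hW0 hb0 ha0 hna0 ha hne; have := h1 hne; lia.
  have exunc : forall W : wiring I S, Pst I W -> bb_pairings W = B ->
      (inl a0 : device I S) \notin paired W.
    move=> W hW hb; have [a ha hna] := hnall W hW hb.
    by rewrite -(uniq_unc W hW hb a ha hna).
  have cD1 : #|Dfull B :\ a0| = S.
    by move: cD; rewrite (cardsD1 a0) ha0 hcase add1n => [[]].
  rewrite (count_gen (D := Dfull B :\ a0) hW0 hb0 (subsetDl _ _)).
  + by rewrite cD1 ffactnn.
  + move=> W hW hb; split.
      move=> a; rewrite in_setD1 => /andP[hne ha]; apply: contraT => hna.
      by rewrite (uniq_unc W hW hb a ha hna) eqxx in hne.
    by move=> a ha; rewrite in_setD1 ha andbT negbK => /eqP ->; exact: exunc.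
  + move=> f hf a ha; rewrite in_setD1 ha andbT negbK => /eqP ->; split.
    * move=> y hy; case: y hy => [a'|s] hy.
        case: (boolP ((inl a' : device I S) \in cover B)) => hc.
          have /bigcupP [p hp hap] := hc; apply/pairedP; exists p => //.
          by apply/Wf_memP; left.
        have haD : a' \in Dfull B :\ a0.
          rewrite in_setD1 inE hc andbT; apply: contra hy => /eqP ->; by [].
        apply/pairedP; exists [set inl a'; (inr (f (exist _ a' haD)) : device I S)].
          by apply/Wf_memP; right; exists (exist _ a' haD).
        by rewrite !inE eqxx.
      have hcr : #|{: 'I_S}| <= #|{: {a : 'I_I | a \in Dfull B :\ a0}}|.
        by rewrite card_sig card_ord; rewrite (_ : #|[pred x | x \in Dfull B :\ a0]| = S).
      have /codomP [x ->] := inj_card_onto hf hcr s.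
      apply/pairedP; exists [set inl (val x); (inr (f x) : device I S)].
        by apply/Wf_memP; right; exists x.
      by rewrite !inE eqxx orbT.
    * have [_ _ WC0] := hW0.
      case: (WC0 a0 (ltn_ord a0)) => [h|[_ hlt]]; first by rewrite h in hna0.
      move=> p /Wf_memP [hp|[x ->]].
        exact: hlt p (subsetP (B_sub hb0) p hp).
      have := valP x; rewrite in_setD1 => /andP[hne hxD].
      exists (val x); last by rewrite !inE eqxx.
      by have := unc_max hW0 hb0 ha0 hna0 hxD hne.
- rewrite (count_gen (D := Dfull B) hW0 hb0 (subxx _)).
  + by rewrite cD ffact_factd.
  + move=> W hW hb; split=> [a ha|a ha]; last by rewrite ha.
    apply: contraT => hna; have := unc_le hb0 hW hb ha hna.
    have : 0 < #|Dfull B| by apply/card_gt0P; exists a.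
    lia.
  + by move=> f hf a ->.
Qed.
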